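(* For all integers $m\ge1$ and $n\ge1$, $$\sum_{k=1}^n k\binom{m+k-1}{k}^{-1}\binom{2m+k-1}{k}=\frac{[n(m+1)-m+1](m+n)}{(m+1)(m+2)}\binom{m+n}{n+1}^{-1}\binom{2m+n}{n+1}+\frac{2m(m-1)}{(m+1)(m+2)}.$$ *)

(* Defs.v *)
From mathcomp Require Import all_boot all_order all_algebra.

(* Main.v *)
Require Import Defs.
From mathcomp Require Import all_boot all_order all_algebra.
From mathcomp Require Import ring zify.
Import GRing.Theory Num.Theory.
Local Open Scope ring_scope.

Section Aux.
Variable m : nat.
Hypothesis hm : (1 <= m)%N.

Definition Rr (j : nat) : rat := 'C(2 * m + j, j + 1)%:R / 'C(m + j, j + 1)%:R.

Lemma Cnz j : ('C(m + j, j + 1)%:R : rat) != 0.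
Proof. rewrite pnatr_eq0 -lt0n bin_gt0; lia. Qed.

Lemma term_eq j :
  (j.+1%:R * ('C(m + j.+1 - 1, j.+1)%:R : rat)^-1 * 'C(2 * m + j.+1 - 1, j.+1)%:R)
  = j.+1%:R * Rr j.
Proof.
by rewrite /Rr !addn1 !addnS !subn1 /= -mulrA [_^-1 * _]mulrC.
Qed.

Lemma binS a k : ('C(a.+1, k.+2)%:R : rat) = a.+1%:R * 'C(a, k.+1)%:R / k.+2%:R.
Proof.
have e := mul_bin_diag a.+1 k.+1.
apply: (@mulfI _ (k.+2%:R)); first by rewrite pnatr_eq0.
move: e => /(congr1 (fun x => x%:R : rat)); rewrite !natrM /= => ->.
by field; rewrite -natrD pnatr_eq0.
Qed.

Lemma Rr_rec j : Rr j.+1 = Rr j * (2 * m + j).+1%:R / (m + j).+1%:R.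
Proof.
rewrite /Rr !addn1 !addnS !binS.
have := Cnz j; rewrite addn1 => ?.
have : ((m + j).+1%:R : rat) != 0 by rewrite pnatr_eq0.
have : (j.+2%:R : rat) != 0 by rewrite pnatr_eq0.
move=> ? ? ; field.
rewrite -?natrD ?nat1r ?natr1 ?pnatr_eq0 /= andbT -lt0n bin_gt0; lia.
Qed.

Definition term (k : nat) : rat :=
  k%:R * ('C(m + k - 1, k)%:R : rat)^-1 * 'C(2 * m + k - 1, k)%:R.

Lemma main_ind n :
  \sum_(1 <= k < n.+2) term k
  = (((n.+1 * (m + 1))%:R - m%:R + 1) * (m + n.+1)%:R / ((m + 1) * (m + 2))%:R) * Rr n.+1
    + (2 * m * (m - 1))%:R / ((m + 1) * (m + 2))%:R.
Proof.
have hm1 : ((m + 1)%:R : rat) != 0 by rewrite pnatr_eq0 addn1.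
have hm2 : ((m + 2)%:R : rat) != 0 by rewrite pnatr_eq0 addn2.
have hm0 : (m%:R : rat) != 0 by rewrite pnatr_eq0 -lt0n.
elim: n => [|n IH].
  rewrite big_nat1 /term term_eq Rr_rec /Rr !addn0 !add0n !bin1.
  rewrite !natrM !natrD natrB // ?natrM.
  field.
  by rewrite -?natrD ?nat1r ?natr1 ?pnatr_eq0 /= addn2 /= -lt0n hm.
rewrite big_nat_recr //= IH /term term_eq (Rr_rec n.+1).
rewrite !natrM !natrD ?natrB // ?natrM.
rewrite -[n.+2]addn2 -[n.+1]addn1 !addnA ?addn0 !natrD.
field.
do 3 rewrite -?natrD ?natr1 ?nat1r.
rewrite !pnatr_eq0; lia.
Qed.
End Aux.

Theorem mainTheorem11 (m n : nat) (hm : (1 <= m)%N) (hn : (1 <= n)%N) :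
  \sum_(1 <= k < n.+1) (k%:R * ('C(m + k - 1, k)%:R : rat)^-1 * 'C(2 * m + k - 1, k)%:R)
  = ((n * (m + 1))%:R - m%:R + 1) * (m + n)%:R / ((m + 1) * (m + 2))%:R
      * ('C(m + n, n + 1)%:R)^-1 * 'C(2 * m + n, n + 1)%:R
    + (2 * m * (m - 1))%:R / ((m + 1) * (m + 2))%:R.
Proof.
case: n hn => // n _.
have := main_ind m hm n.
rewrite /term => ->.
rewrite /Rr; ring.
Qed.
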